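(* Let $f:M\to M$ be a continuous map of a compact metric space and $\{\phi_n\}$ a subadditive sequence of continuous functions with $|\phi_n(x)|/n\le L$ for $\nu$-a.e. $x$, all $n$ and all $\nu\in\mathcal M_f$, for some $L>0$; let $\Phi=\inf_n\phi_n/n$ be its rate of growth. Fix $\epsilon>0$ and, for $N>0$, let $\mathcal M_N=\{\nu\in\mathcal M_f:\int\frac{\phi_n}{n}d\nu<\int\Phi\,d\nu+\epsilon\ \text{for all } n\ge N\}$ and $P_N(\phi)=\sup_{\nu\in\mathcal M_N}\{h(\nu)+\int\phi\,d\nu\}$. Then for every $N>0$, $$\lim_{n\to\infty}P_N\!\left(\frac{\phi_n}{n}\right)=\inf_{n>0}P_N\!\left(\frac{\phi_n}{n}\right).$$
   Context: $\mathcal M_f$ is the set of $f$-invariant Borel probability measures, $h(\nu)$ the metric entropy. Subadditive: $\phi_{n+m}\le\phi_n+\phi_m\circ f^n$. By Kingman's theorem $\Phi=\inf_n\phi_n/n=\lim_n\phi_n/n$ $\nu$-a.e. for every $\nu\in\mathcal M_f$. *)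

(* Defs.v *)
From HB Require Import structures.
From mathcomp Require Import all_boot all_order all_algebra.
From mathcomp Require Import all_classical all_reals all_analysis.
Set Implicit Arguments. Unset Strict Implicit. Unset Printing Implicit Defensive.
Import Order.TTheory GRing.Theory Num.Theory.
Import numFieldNormedType.Exports.
Local Open Scope classical_set_scope.
Local Open Scope ring_scope.

Section Defs.
Variables (R : realType) (M : pseudoPMetricType R).

Definition BM := g_sigma_algebraType (@open M).

Definition f_invariant (f : M -> M) (nu : probability BM R) : Prop :=
  forall A : set BM, measurable A -> nu (f @^-1` A) = nu A.

Definition is_mpart (k : nat) (A : 'I_k -> set BM) : Prop :=
  [/\ (forall i, measurable (A i)), trivIset setT A & \bigcup_i A i = setT].

Definition eta (t : R) : R := - (t * ln t).

(* H_nu( xi v f^-1 xi v ... v f^-(n-1) xi ), cells indexed by words w *)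
Definition Hjoin (nu : probability BM R) (f : M -> M) (k : nat)
  (A : 'I_k -> set BM) (n : nat) : R :=
  \sum_(w : {ffun 'I_n -> 'I_k})
     eta (fine (nu [set x : BM | forall i : 'I_n, A (w i) (iter i f x)])).

Definition hpart (nu : probability BM R) (f : M -> M) (k : nat)
  (A : 'I_k -> set BM) : R :=
  limn (fun n => Hjoin nu f A n / n%:R).

Definition KSentropy (f : M -> M) (nu : probability BM R) : \bar R :=
  ereal_sup [set e | exists k (A : 'I_k -> set BM),
                       is_mpart A /\ e = (hpart nu f A)%:E].

Definition rate (phi : nat -> M -> R) (x : M) : \bar R :=
  ereal_inf [set (phi n x / n%:R)%:E | n in [set n | (0 < n)%N]].

Definition MN (f : M -> M) (phi : nat -> M -> R) (eps : R) (N : nat)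
  : set (probability BM R) :=
  [set nu | f_invariant f nu /\
     forall n, (N <= n)%N ->
       (\int[nu]_x (phi n x / n%:R)%:E < \int[nu]_x rate phi x + eps%:E)%E].

Definition PN (f : M -> M) (phi : nat -> M -> R) (eps : R) (N : nat)
  (psi : M -> R) : \bar R :=
  ereal_sup [set (KSentropy f nu + \int[nu]_x (psi x)%:E)%E
            | nu in MN f phi eps N].

End Defs.

(* Main.v *)
Require Import Defs.
From HB Require Import structures.
From mathcomp Require Import all_boot all_order all_algebra.
From mathcomp Require Import all_classical all_reals all_analysis.
From mathcomp Require Import measurable_realfun.
Import Order.TTheory GRing.Theory Num.Theory.
Import numFieldNormedType.Exports.
Local Open Scope classical_set_scope.
Local Open Scope ring_scope.
From mathcomp Require Import ring lra.

Section S.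
Variables (R : realType) (M : pseudoPMetricType R).

Lemma cont_meas_R (g : M -> R) : continuous g ->
  measurable_fun [set: BM M] (g : BM M -> R).
Proof.
move=> /continuousP cg.
apply: (measurability _ (RGenOpens.measurableE R)).
move=> _ [_ [a [b ->]] <-]; rewrite setTI.
apply: sub_sigma_algebra; apply: cg; exact: interval_open.
Qed.

Lemma cont_meas_M (f : M -> M) : continuous f ->
  measurable_fun [set: BM M] (f : BM M -> BM M).
Proof.
move=> /continuousP cf.
apply: (@measurability _ _ (BM M) (BM M) setT f (@open M)); first by [].
move=> _ [A oA <-]; rewrite setTI.
apply: sub_sigma_algebra; exact: cf.
Qed.

Lemma cont_bound (g : M -> R) : compact [set: M] -> continuous g ->
  exists B : R, 0 <= B /\ forall x, `|g x| <= B.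
Proof.
move=> cM cg.
have cI : compact [set g x | x in [set: M]].
  apply: continuous_compact => //; exact: continuous_subspaceT.
have [B [Br HB]] := compact_bounded cI.
exists (`|B| + 1); split; first by rewrite addr_ge0.
move=> x; apply: (HB (`|B| + 1)); last by exists x.
by rewrite (le_lt_trans (real_ler_norm Br)) // ltrDl.
Qed.

Lemma iter_cont (f : M -> M) j : continuous f -> continuous (iter j f).
Proof.
move=> cf; elim: j => [|j IH].
  by move=> x; exact: cvg_id.
move=> x; change (iter j.+1 f) with (f \o iter j f).
apply: continuous_comp; [exact: IH | exact: cf].
Qed.

Lemma cont_integrable (nu : probability (BM M) R) (g : M -> R) :
  compact [set: M] -> continuous g ->
  nu.-integrable [set: BM M] (EFin \o (g : BM M -> R)).
Proof.
move=> cM cg; have [B [B0 HB]] := cont_bound g cM cg.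
apply: measurable_bounded_integrable => //.
- by apply: le_lt_trans (probability_le1 _ measurableT) _; exact: ltry.
- exact: cont_meas_R.
- rewrite /bounded_near; near=> K; move=> x _ /=.
  apply: le_trans (HB x) _; near: K.
  by apply: nbhs_pinfty_ge; rewrite ger0_real.
Unshelve. all: by end_near.
Qed.


Section Inv.
Variables (f : M -> M) (phi : nat -> M -> R).
Hypotheses (cM : compact [set: M]) (cf : continuous f)
  (cphi : forall n, (0 < n)%N -> continuous (phi n))
  (sub : forall n m, (0 < n)%N -> (0 < m)%N ->
     forall x, phi (n + m)%N x <= phi n x + phi m (iter n f x)).
Variables (nu : probability (BM M) R) (inv : f_invariant f nu).

Local Open Scope ereal_scope.

Lemma inv_integral (g : M -> R) : continuous g ->
  \int[nu]_x (g (f x))%:E = \int[nu]_x (g x)%:E.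
Proof.
move=> cg; have mf := cont_meas_M f cf.
have mg : measurable_fun [set: BM M] (EFin \o (g : BM M -> R)).
  by apply/measurable_EFinP; exact: (cont_meas_R g).
have ig : nu.-integrable (f @^-1` [set: BM M]) ((EFin \o (g : BM M -> R)) \o f).
  rewrite preimage_setT; apply: (cont_integrable nu (g \o f) cM).
  by move=> x; apply: continuous_comp; [exact: cf | exact: cg].
have := integral_pushforward mf mg ig measurableT.
rewrite preimage_setT => <-.
apply: eq_measure_integral => A mA _; exact: inv.
Qed.


Lemma comp_cont k j : (0 < k)%N -> continuous (fun x => phi k (iter j f x)).
Proof.
move=> k0 x; apply: (@continuous_comp _ _ _ (iter j f) (phi k)).
  exact: iter_cont. exact: cphi.
Qed.

Lemma shift k j : (0 < k)%N ->
  \int[nu]_x (phi k (iter j f x))%:E = \int[nu]_x (phi k x)%:E.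
Proof.
move=> k0; elim: j => [|j IH] //.
under eq_integral do rewrite iterSr.
rewrite (inv_integral (fun y => phi k (iter j f y))) //.
exact: comp_cont.
Qed.

Definition Ik k := fine (\int[nu]_x (phi k x)%:E).

Lemma intE k : (0 < k)%N -> \int[nu]_x (phi k x)%:E = (Ik k)%:E.
Proof.
move=> k0; rewrite fineK //; apply: integrable_fin_num => //.
exact: (cont_integrable nu (phi k) cM (cphi k k0)).
Qed.

Lemma Isub a b : (0 < a)%N -> (0 < b)%N -> (Ik (a + b) <= Ik a + Ik b)%R.
Proof.
move=> a0 b0; rewrite -lee_fin EFinD -!intE ?addn_gt0 ?a0 //.
rewrite -(shift b a) //.
have ia := cont_integrable nu (phi a) cM (cphi a a0).
have ib := cont_integrable nu _ cM (comp_cont b a b0).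
rewrite -integralD //.
have ic : continuous (fun x => phi a x + phi b (iter a f x))%R.
  move=> x; apply: continuousD; [exact: cphi | exact: comp_cont].
under [X in _ <= X]eq_integral do rewrite -EFinD.
apply: le_integral => //.
- by apply: (cont_integrable nu (phi (a + b)%N) cM); apply: cphi; rewrite addn_gt0 a0.
- exact: (cont_integrable nu _ cM ic).
- by move=> x _; rewrite lee_fin; exact: sub.
Qed.

Lemma Ibound k B : (0 < k)%N -> (forall x, `|phi k x| <= B)%R -> (`|Ik k| <= B)%R.
Proof.
move=> k0 HB; have ik := cont_integrable nu (phi k) cM (cphi k k0).
have icB : forall c : R, nu.-integrable [set: BM M] (fun x : BM M => c%:E).
  move=> c; apply: (cont_integrable nu (fun _ : M => c) cM).
  by move=> x; exact: cvg_cst.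
have cstE : forall c : R, \int[nu]_x (c%:E) = c%:E.
  move=> c; rewrite integral_cst //.
  by rewrite [X in (_ * X)%E](_ : _ = 1%E) ?mule1 //; exact: probability_setT.
rewrite ler_norml; apply/andP; split; rewrite -lee_fin -intE //.
- rewrite -cstE; apply: le_integral => // x _; rewrite lee_fin.
  by have := HB x; rewrite ler_norml => /andP[].
- rewrite -[X in _ <= X]cstE; apply: le_integral => // x _; rewrite lee_fin.
  by have := HB x; rewrite ler_norml => /andP[].
Qed.

Lemma normalized k : (0 < k)%N ->
  \int[nu]_x (phi k x / k%:R)%:E = (Ik k / k%:R)%:E.
Proof.
move=> k0; under eq_integral do rewrite EFinM muleC.
rewrite integralZl //; last exact: (cont_integrable nu (phi k) cM (cphi k k0)).
by rewrite intE // -EFinM mulrC.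
Qed.

End Inv.
End S.

Section Real.
Variable R : realType.

Lemma real_est (I B : nat -> R) (n m : nat) : (0 < n)%N -> (n <= m)%N ->
  (forall a b, (0 < a)%N -> (0 < b)%N -> I (a + b)%N <= I a + I b) ->
  (forall k, (0 < k)%N -> `|I k| <= B k) -> (forall k, 0 <= B k) ->
  I m / m%:R <= I n / n%:R + ((\sum_(k < n.+1) B k) * (n%:R + 1)) / m%:R.
Proof.
move=> n0 nm Isub IB B0.
set K := \sum_(k < n.+1) B k.
have K0 : 0 <= K by apply: sumr_ge0 => k _.
have BK : forall r, (r <= n)%N -> B r <= K.
  move=> r rn; rewrite /K (bigD1 (Ordinal (rn : (r < n.+1)%N))) //=.
  by rewrite lerDl sumr_ge0.
have Iq : forall q, I (q.+1 * n)%N <= q.+1%:R * I n.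
  elim=> [|q IH]; first by rewrite mul1n mul1r.
  rewrite mulSn; apply: le_trans (Isub _ _ n0 _) _; first by rewrite muln_gt0 n0.
  by rewrite -[q.+2]add1n natrD mulrDl mul1r lerD2l.
have m0 : (0 < m)%N by apply: leq_trans nm.
set q := (m %/ n)%N; set r := (m %% n)%N.
have q0 : (0 < q)%N by rewrite divn_gt0.
have mE : m = (q * n + r)%N by rewrite /q /r -divn_eq.
have rn : (r < n)%N by rewrite ltn_mod.
have Im : I m <= q%:R * I n + K.
  have Iqn : I (q * n)%N <= q%:R * I n by rewrite -(prednK q0) Iq.
  rewrite mE; have [r0|r0] := posnP r.
    by rewrite r0 addn0; apply: le_trans Iqn _; rewrite lerDl.
  apply: le_trans (Isub _ _ _ r0) _; first by rewrite muln_gt0 q0.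
  apply: lerD => //; apply: le_trans (BK _ (ltnW rn)).
  by apply: le_trans (IB _ r0); exact: ler_norm.
have In : - K <= I n.
  have := IB n n0; rewrite ler_norml => /andP[h _].
  by apply: le_trans h; rewrite lerN2 BK.
have mR : m%:R = q%:R * n%:R + r%:R :> R by rewrite mE natrD natrM.
have nR : (1 <= n%:R :> R) by rewrite ler1n.
have rR : (r%:R <= n%:R :> R) by rewrite ler_nat ltnW.
have r0R : (0 <= r%:R :> R) by [].
have mpos : (0 < m%:R :> R) by rewrite ltr0n.
set t := I n / n%:R.
have tE : I n = t * n%:R by rewrite /t divfK // gt_eqF // (lt_le_trans ltr01).
have tK : - K <= t.
  rewrite /t ler_pdivlMr ?(lt_le_trans ltr01) //.
  apply: le_trans In; rewrite mulNr lerN2 ler_peMr //.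
rewrite ler_pdivrMr // mulrDl divfK ?gt_eqF //.
rewrite mR; rewrite tE in Im.
have h1 : 0 <= (t + K) * r%:R by apply: mulr_ge0 => //; lra.
have h2 : K * r%:R <= K * n%:R by rewrite ler_wpM2l.
nra.
Qed.


Local Open Scope ereal_scope.

Lemma small (c e : R) (n : nat) : (0 < e)%R ->
  \forall m \near \oo, (n <= m.+1)%N /\ (c / m.+1%:R <= e)%R.
Proof.
move=> e0; near=> m; split; first by near: m; apply: filterS (nbhs_infty_ge n) => m nm; apply: leqW.
have m0 : (0 < m.+1%:R :> R)%R by rewrite ltr0n.
rewrite ler_pdivrMr //.
have : ((Num.Def.trunc (`|c| / e)).+1 <= m.+1)%N by near: m; apply: filterS (nbhs_infty_ge (Num.Def.trunc (`|c| / e))) => m h.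
rewrite -(ler_nat R) => hm.
have := truncnS_gt (`|c| / e); rewrite ltr_pdivrMr // => h.
apply: le_trans (ler_norm c) _.
apply: (le_trans (ltW h)); rewrite mulrC ler_wpM2l //; exact: ltW.
Unshelve. all: by end_near.
Qed.

Lemma seq_lim (u : nat -> \bar R) (c : nat -> R) :
  (forall n m, (0 < n)%N -> (n <= m)%N -> u m <= u n + (c n / m%:R)%:E) ->
  (fun n => u n.+1) @ \oo --> ereal_inf [set u n | n in [set n | (0 < n)%N]].
Proof.
move=> H.
set S := [set u n | n in _]; set I := ereal_inf S.
have lb : forall n, (0 < n)%N -> I <= u n.
  by move=> n n0; apply: ereal_inf_lbound; exists n.
have ap : forall x, I < x -> exists n, (0 < n)%N /\ u n < x.
  by move=> x /ereal_inf_lt [_ [n n0 <-] h]; exists n.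
case E : I => [r| |].
- apply/fine_cvgP.
  have hI : I < (r + 1)%:E by rewrite E lte_fin ltrDl.
  have [n0 [n00 un0]] := ap _ hI.
  split.
    near=> m; have [h1 h2] : (n0 <= m.+1)%N /\ (c n0 / m.+1%:R <= 1)%R.
      by near: m; exact: small.
    have l1 := lb m.+1 isT; rewrite E in l1.
    have l2 := H _ _ n00 h1.
    move: l1 l2; case: (u m.+1) => [s| |] //.
    + move=> _; rewrite leye_eq => /eqP h; move: un0.
      by case: (u n0) h => [s| |] //.
  apply/cvgrPdist_le => e e0.
  have hI' : I < (r + e / 2)%:E by rewrite E lte_fin ltrDl divr_gt0.
  have [n [n1 un]] := ap _ hI'.
  near=> m; have [h1 h2] : (n <= m.+1)%N /\ (c n / m.+1%:R <= e / 2)%R.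
    by near: m; apply: small; rewrite divr_gt0.
  have l1 := lb m.+1 isT; rewrite E in l1.
  have l2 := H _ _ n1 h1.
  have l3 : u m.+1 <= (r + e)%:E.
    apply: le_trans l2 _; rewrite [X in _ <= X](_ : _ = (r + e / 2)%:E + (e / 2)%:E); last first.
      by rewrite -EFinD; congr EFin; field.
    by apply: leeD; [exact: ltW | rewrite lee_fin].
  change (`|r - fine (u m.+1)| <= e)%R; move: l1 l3; case: (u m.+1) => [s| |] //=.
  + rewrite !lee_fin => h3 h4; rewrite ler_norml; apply/andP; split; lra.
- have uy : forall n, (0 < n)%N -> u n = +oo.
    by move=> n n0; have := lb n n0; rewrite E leye_eq => /eqP.
  rewrite (_ : (fun n => u n.+1) = fun=> +oo); first exact: cvg_cst.
  by apply: funext => n; rewrite uy.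
- apply/cvgeNyPle => A.
  have hI : I < (A - 1)%:E by rewrite E ltNyr.
  have [n [n0 un]] := ap _ hI.
  near=> m; have [h1 h2] : (n <= m.+1)%N /\ (c n / m.+1%:R <= 1)%R.
    by near: m; exact: small.
  apply: le_trans (H _ _ n0 h1) _.
  rewrite [X in _ <= X](_ : _ = (A - 1)%:E + 1%:E); last by rewrite -EFinD subrK.
  by apply: leeD; [exact: ltW | rewrite lee_fin].
Unshelve. all: by end_near.
Qed.

End Real.


Theorem lemma6p2 (R : realType) (M : pseudoPMetricType R) (f : M -> M)
  (phi : nat -> M -> R) (L eps : R) :
  hausdorff_space M -> compact [set: M] -> continuous f ->
  (forall n, (0 < n)%N -> continuous (phi n)) ->
  (forall n m, (0 < n)%N -> (0 < m)%N ->
     forall x, phi (n + m)%N x <= phi n x + phi m (iter n f x)) ->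
  0 < L ->
  (forall nu : probability (BM M) R, f_invariant f nu ->
     forall n, (0 < n)%N -> {ae nu, forall x : BM M, `|phi n x| / n%:R <= L}) ->
  0 < eps ->
  forall N : nat, (0 < N)%N ->
    (fun n => PN f phi eps N (fun x => phi n.+1 x / n.+1%:R)) @ \oo -->
      ereal_inf [set PN f phi eps N (fun x => phi n x / n%:R)
                | n in [set n | (0 < n)%N]].
Proof.
move=> hM cM cf cphi sub L0 hL e0 N N0.
have hB : forall k, exists B : R, 0 <= B /\ ((0 < k)%N -> forall x, `|phi k x| <= B).
  move=> k; have [->|k0] := posnP k; first by exists 0.
  have [B [B0 HB]] := cont_bound R M (phi k) cM (cphi k k0); by exists B.
case: (choice hB) => Bf HBf.
pose c := fun n : nat => (\sum_(k < n.+1) Bf k) * (n%:R + 1).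
apply: (@seq_lim R (fun n => PN f phi eps N (fun x => phi n x / n%:R)) c).
move=> n m n0 nm.
have m0 : (0 < m)%N by apply: leq_trans nm.
apply: ge_ereal_sup => _ [nu [inv Hmn] <-].
rewrite (normalized R M phi cM cphi nu m m0).
apply: (@le_trans _ _ (KSentropy f nu + ((Ik R M phi nu n / n%:R)%:E + (c n / m%:R)%:E))%E).
  apply: leeD => //; rewrite -EFinD lee_fin.
  apply: (real_est R (Ik R M phi nu) Bf) => //.
  - by move=> a b a0 b0; exact: (Isub R M f phi cM cf cphi sub nu inv a b a0 b0).
  - by move=> k k0; apply: (Ibound R M phi cM cphi nu k _ k0); case: (HBf k) => _; apply.
  - by move=> k; case: (HBf k).
rewrite addeA; apply: leeD => //.
apply: ereal_sup_ubound; exists nu => //.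
by rewrite (normalized R M phi cM cphi nu n n0).
Qed.
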